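(* Let $t,w,w',n,g$ be positive integers. If there exists a Steiner system $\mathrm{S}(t,w',n)$ and a $\mathrm{GMHP}^*(t,w,w',g)$, then there exists a $\mathrm{GMHP}^*(t,w,n,g)$.
   Context: A Steiner system $\mathrm{S}(t,k,n)$ is a pair $(X,\mathcal{B})$ with $|X|=n$ and $\mathcal{B}$ a family of $k$-subsets (blocks) of $X$ such that every $t$-subset of $X$ lies in exactly one block. For a set $Y$ of size $m$, let $X=Y\times[g]$ with groups $\{y\}\times[g]$, $y\in Y$. An H-packing $\mathrm{HP}(m,g,w,t)$ is a family of $w$-subsets (blocks) of $X$, each meeting every group in at most one point, such that every $t$-subset of $X$ with points in $t$ distinct groups lies in at most one block. A block $\{(y_1,a_1),\dots,(y_w,a_w)\}$ is identified with the word indexed by $Y$ over $\{0\}\cup[g]$ with entry $a_s$ at coordinate $y_s$ and $0$ elsewhere. A $\mathrm{GMHP}^*(t,w,m,g)$ is an $\mathrm{HP}(m,g,w,t)$ in which any two distinct blocks have Hamming distance at least $2(w-t+1)$ and which has exactly $g^{t-1}\binom{m}{t}/\binom{w}{t}$ blocks. *)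

(* Defs.v *)
From mathcomp Require Import all_boot all_order all_algebra.
Set Implicit Arguments. Unset Strict Implicit. Unset Printing Implicit Defensive.

Definition steiner_system (t k n : nat) (B : {set {set 'I_n}}) : Prop :=
  (forall b, b \in B -> #|b| = k) /\
  (forall T : {set 'I_n}, #|T| = t -> #|[set b in B | T \subset b]| = 1).

(* Words indexed by Y = 'I_m over the alphabet {0} u [g], where [g] = {1..g}
   is encoded by the ordinals 1..g of 'I_(g.+1). *)
Definition word (m g : nat) := {ffun 'I_m -> 'I_g.+1}.

(* Points of X = Y x [g]; the point (y, a) with a : 'I_g stands for (y, a+1).
   Group of a point = its first component. *)
Definition point (m g : nat) := ('I_m * 'I_g)%type.

Definition in_block m g (u : word m g) (p : point m g) : bool :=
  val (u p.1) == (val p.2).+1.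

Definition weight m g (u : word m g) : nat := #|[set i | u i != ord0]|.

Definition hdist m g (u v : word m g) : nat := #|[set i | u i != v i]|.

(* H-packing HP(m,g,w,t): blocks are w-subsets meeting each group in at most
   one point (automatic for words; size w = weight w), and every t-subset with
   points in t distinct groups is contained in at most one block. *)
Definition H_packing (m g w t : nat) (C : {set word m g}) : Prop :=
  (forall u, u \in C -> weight u = w) /\
  (forall S : {set point m g}, #|S| = t ->
     {in S &, forall p q, p.1 = q.1 -> p = q} ->
     #|[set u in C | [forall p in S, in_block u p]]| <= 1).

Definition GMHP_star (t w m g : nat) (C : {set word m g}) : Prop :=
  @H_packing m g w t C /\
  (forall u v, u \in C -> v \in C -> u != v -> 2 * (w - t + 1) <= hdist u v) /\
  (#|C|%:Q = (g ^ (t - 1) * 'C(m, t))%N%:Q / ('C(w, t))%:Q)%R.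

(* Main.v *)
Require Import Defs.
From mathcomp Require Import all_boot all_order all_algebra.
From mathcomp Require Import ring zify.
Set Implicit Arguments. Unset Strict Implicit. Unset Printing Implicit Defensive.

Lemma exists_sub (T : finType) (A : {set T}) k : k <= #|A| -> exists X : {set T}, X \subset A /\ #|X| = k.
Proof.
move=> hk.
have : 0 < #|[set X : {set T} | X \subset A & #|X| == k]| by rewrite cards_draws bin_gt0.
case/card_gt0P => X; rewrite inE => /andP[h1 /eqP h2]; by exists X.
Qed.

Lemma steiner_count t k n B : @steiner_system t k n B -> #|B| * 'C(k,t) = 'C(n,t).
Proof.
case=> Bsz Bst.
rewrite -[in RHS](card_ord n) -(card_draws _ t).
transitivity (\sum_(T in [set T : {set 'I_n} | #|T| == t]) \sum_(b in B) (T \subset b : nat)).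
  rewrite exchange_big /= -sum_nat_const; apply: eq_bigr => b bB.
  rewrite -(Bsz b bB) -cards_draws -sum1_card big_mkcond [RHS]big_mkcond /=.
  apply: eq_bigr => T _; rewrite !inE; by case: (T \subset b); case: (#|T| == t).
rewrite -sum1_card; apply: eq_bigr => T; rewrite inE => /eqP /Bst <-.
rewrite -sum1_card big_mkcond [RHS]big_mkcond /=; apply: eq_bigr => b _.
rewrite !inE; by case: (b \in B); case: (T \subset b).
Qed.

Lemma steiner_uniq t k n B (b b' T : {set 'I_n}) : @steiner_system t k n B -> b \in B -> b' \in B ->
  T \subset b -> T \subset b' -> #|T| = t -> b = b'.
Proof.
case=> _ Bst bB bB' Tb Tb' hT.
have /eqP/cards1P [c hc] := Bst T hT.
have : b \in [set c] by rewrite -hc inE bB Tb.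
have : b' \in [set c] by rewrite -hc inE bB' Tb'.
by rewrite !inE => /eqP -> /eqP ->.
Qed.

Lemma steiner_inter t k n B (b b' : {set 'I_n}) : @steiner_system t k n B -> b \in B -> b' \in B ->
  b != b' -> #|b :&: b'| < t.
Proof.
move=> hB bB bB' hne; rewrite ltnNge; apply/negP => /exists_sub [X [hX hXc]].
move: hX; rewrite subsetI => /andP[h1 h2].
by move: hne; rewrite (steiner_uniq hB bB bB' h1 h2 hXc) eqxx.
Qed.

Definition emb n w' g (f : 'I_w' -> 'I_n) (u : word w' g) : word n g :=
  [ffun i => if [pick j | f j == i] is Some j then u j else ord0].

Lemma emb_f n w' g (f : 'I_w' -> 'I_n) (u : word w' g) j : injective f -> emb f u (f j) = u j.
Proof.
move=> inj; rewrite ffunE; case: pickP => [j' /eqP/inj -> // | /(_ j)]; by rewrite eqxx.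
Qed.

Lemma emb_diff n w' g (f : 'I_w' -> 'I_n) (u v : word w' g) : injective f ->
  [set i | emb f u i != emb f v i] = f @: [set j | u j != v j].
Proof.
move=> inj; apply/setP => i; rewrite inE.
case: (pickP (fun j => f j == i)) => [j /eqP <- | H].
  by rewrite !emb_f // mem_imset // inE.
rewrite !ffunE; case: pickP => [j hj|_]; first by rewrite H in hj.
rewrite eqxx; apply/esym/negbTE/imsetP => [[j _ E]]; by move: (H j); rewrite E eqxx.
Qed.

Lemma emb_supp n w' g (f : 'I_w' -> 'I_n) (u : word w' g) : injective f ->
  [set i | emb f u i != ord0] = f @: [set j | u j != ord0].
Proof.
move=> inj; apply/setP => i; rewrite inE.
case: (pickP (fun j => f j == i)) => [j /eqP <- | H].
  by rewrite !emb_f // mem_imset // inE.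
rewrite !ffunE; case: pickP => [j hj|_]; first by rewrite H in hj.
rewrite eqxx; apply/esym/negbTE/imsetP => [[j _ E]]; by move: (H j); rewrite E eqxx.
Qed.

Lemma dist_lemma m g (x y : word m g) w t : weight x = w -> weight y = w -> t <= w ->
  #|[set i | x i != ord0] :&: [set i | y i != ord0]| < t -> 2 * (w - t + 1) <= hdist x y.
Proof.
rewrite /weight /hdist => hx hy htw hI.
set sx := [set i | x i != ord0] in hx hI *; set sy := [set i | y i != ord0] in hy hI *.
set Z := [set i | x i != y i].
have h1 : sx :\: sy \subset Z :&: sx.
  apply/subsetP => i; rewrite !inE => /andP[/negPn/eqP E H]; by rewrite E H.
have h2 : sy :\: sx \subset Z :\: sx.
  apply/subsetP => i; rewrite !inE => /andP[/negPn/eqP E H]; by rewrite E eqxx eq_sym H.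
have := cardsID sx Z; have := subset_leq_card h1; have := subset_leq_card h2.
rewrite !cardsD hx hy setIC; lia.
Qed.

Theorem lemma3p8 (t w w' n g : nat) :
  0 < t -> 0 < w -> 0 < w' -> 0 < n -> 0 < g ->
  (exists B : {set {set 'I_n}}, @steiner_system t w' n B) ->
  (exists C : {set word w' g}, @GMHP_star t w w' g C) ->
  exists D : {set word n g}, @GMHP_star t w n g D.
Proof.
move=> ht hw hw' hn hg [B hB] [C [[Cw Cpack] [Cd Ccard]]].
have [Bsz Bst] := hB.
case: (leqP t w) => htw; last first.
  exists set0; split; [split|split].
  - by move=> u; rewrite inE.
  - move=> S _ _; rewrite (_ : [set u in set0 | _] = set0) ?cards0 //.
    by apply/setP => u; rewrite !inE.
  - by move=> u v; rewrite inE.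
  - by rewrite cards0 (bin_small htw) GRing.invr0 GRing.mulr0.
pose x0 : 'I_n := Ordinal hn.
pose G b := odflt [ffun=> x0] [pick f : {ffun 'I_w' -> 'I_n} | injectiveb f && ([set f j | j : 'I_w'] == b)].
have HG : forall b, b \in B -> injective (G b) /\ [set G b j | j : 'I_w'] = b.
  move=> b bB; rewrite /G; case: pickP => [f /andP[/injectiveP ? /eqP] //| H].
  exfalso.
  pose f : {ffun 'I_w' -> 'I_n} := [ffun j => enum_val (cast_ord (esym (Bsz b bB)) j)].
  move: (H f) => /negP; apply; apply/andP; split.
    by apply/injectiveP => j1 j2; rewrite !ffunE => /enum_val_inj/cast_ord_inj.
  apply/eqP/setP => x; apply/imsetP/idP => [[j _ ->]|xb].
    by rewrite ffunE enum_valP.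
  exists (cast_ord (Bsz b bB) (enum_rank_in xb x)) => //.
  by rewrite ffunE cast_ordK enum_rankK_in.
pose E (p : {set 'I_n} * word w' g) := emb (G p.1) p.2.
have Esupp : forall b u, b \in B -> [set i | E (b, u) i != ord0] \subset b.
  move=> b u bB; have [inj img] := HG b bB.
  rewrite /E /= emb_supp // -{2}img; apply/subsetP => ? /imsetP[j _ ->]; exact: imset_f.
have Ew : forall b u, b \in B -> u \in C -> weight (E (b, u)) = w.
  move=> b u bB uC; have [inj img] := HG b bB.
  by rewrite /weight /E /= emb_supp // card_imset // -(Cw u uC).
have Edist : forall b u b' u', b \in B -> u \in C -> b' \in B -> u' \in C -> b != b' ->
    2 * (w - t + 1) <= hdist (E (b, u)) (E (b', u')).
  move=> b u b' u' bB uC bB' uC' hne.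
  apply: dist_lemma; rewrite ?Ew //.
  apply: leq_ltn_trans (steiner_inter hB bB bB' hne).
  by apply: subset_leq_card; apply: setISS; apply: Esupp.
have Einj : {in setX B C &, injective E}.
  move=> [b u] [b' u']; rewrite !inE /= => /andP[bB uC] /andP[bB' uC'] Heq.
  case: (eqVneq b b') => [ebb|hne].
    subst b'; have [inj img] := HG b bB; congr (_, _).
    apply/ffunP => j; by rewrite -(emb_f u j inj) -(emb_f u' j inj) -/(E (b, u)) Heq.
  have := Edist _ _ _ _ bB uC bB' uC' hne; rewrite Heq /hdist.
  rewrite (_ : [set i | _ != _] = set0) ?cards0; last by apply/setP => i; rewrite !inE eqxx.
  lia.
exists (E @: setX B C); split; [split|split].
- by move=> x /imsetP [[b u]]; rewrite inE /= => /andP[bB uC] ->; apply: Ew.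
- move=> S hS hgrp; apply/card_le1_eqP => x y; rewrite !inE.
  case/andP => /imsetP [[b u]]; rewrite inE /= => /andP[bB uC] -> /forall_inP hx.
  case/andP => /imsetP [[b' u']]; rewrite inE /= => /andP[bB' uC'] -> /forall_inP hy.
  pose T := [set p.1 | p in S].
  have hT : #|T| = t by rewrite card_in_imset // => p q pS qS; exact: hgrp.
  have insupp : forall (z : word n g) p, in_block z p -> z p.1 != ord0.
    move=> z p; rewrite /in_block => /eqP h; apply/eqP => h0; by rewrite h0 in h.
  have Tb : T \subset b.
    apply/subsetP => i /imsetP[p pS ->]; apply: (subsetP (Esupp b u bB)).
    rewrite inE; exact: insupp (hx p pS).
  have Tb' : T \subset b'.
    apply/subsetP => i /imsetP[p pS ->]; apply: (subsetP (Esupp b' u' bB')).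
    rewrite inE; exact: insupp (hy p pS).
  have ebb := steiner_uniq hB bB bB' Tb Tb' hT; subst b'.
  have [inj img] := HG b bB.
  pose h (q : point w' g) : point n g := (G b q.1, q.2).
  have hinj : injective h by move=> [j a] [j' a'] [] /inj -> ->.
  pose S' := [set q | h q \in S].
  have SS' : S = h @: S'.
    apply/setP => p; apply/idP/imsetP => [pS|[q]]; last by rewrite inE => qS ->.
    have : p.1 \in [set G b j | j : 'I_w'].
      by rewrite img; apply: (subsetP Tb); exact: imset_f.
    case/imsetP => j _ ej; exists (j, p.2); first by rewrite inE /h /= -ej -surjective_pairing.
    by rewrite /h /= -ej -surjective_pairing.
  have hS' : #|S'| = t by rewrite -hS SS' card_imset.
  have grp' : {in S' &, forall p q, p.1 = q.1 -> p = q}.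
    move=> p q; rewrite !inE => pS qS e; apply: hinj; apply: hgrp => //; by rewrite /h e.
  have tr : forall v, (forall p, p \in S -> in_block (E (b, v)) p) ->
      v \in [set v in C | [forall p in S', in_block v p]] = (v \in C).
    move=> v hv; rewrite inE; apply/andb_idr => _; apply/forall_inP => q; rewrite inE => qS.
    by have := hv _ qS; rewrite /in_block /E /= emb_f.
  have := Cpack S' hS' grp'; move/card_le1_eqP => /(_ u u').
  by rewrite (tr u hx) (tr u' hy) => /(_ uC uC') ->.
- move=> x y /imsetP [[b u]]; rewrite inE /= => /andP[bB uC] -> /imsetP [[b' u']];
    rewrite inE /= => /andP[bB' uC'] -> hne.
  case: (eqVneq b b') => [ebb|hbb]; last exact: Edist.
  subst b'; have [inj img] := HG b bB.
  rewrite /hdist /E /= emb_diff // card_imset //; apply: Cd => //.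
  by apply: contraNneq hne => ->.
- rewrite card_in_imset // cardsX -(steiner_count hB) !PoszM !GRing.rmorphM /=.
  rewrite Ccard !PoszM !GRing.rmorphM /=.
  ring.
Qed.
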